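(* Let $T$ and $B$ be two flat-foldable developable degree-4 single-vertex creased papers sharing two panels, so that they share one inner crease $c$ (the crease joining the two vertices); this union is called a unit. Let $\alpha_1,\alpha_2\in(0,\pi)$ be the sector angles of $T$ adjacent to $c$ and $\alpha_3,\alpha_4\in(0,\pi)$ the sector angles of $B$ adjacent to $c$, with $\alpha_1,\alpha_2$ not both equal to $\pi/2$ and $\alpha_3,\alpha_4$ not both equal to $\pi/2$. Suppose the unit folds rigidly over a closed interval of the common folding angle $\rho$ of $c$ containing more than one point, each vertex moving along one of its two branches (described in the context). For each vertex, the two inner creases adjacent to $c$ lie on the two sides of $c$; call the creases of $T$ and $B$ lying on the same side of $c$ ''corresponding''. Then the folding angles of corresponding creases of $T$ and $B$ are equal up to sign throughout the interval (i.e. $\rho_2\equiv\pm\rho_5$ and $\rho_4\equiv\pm\rho_7$, where $\rho_2,\rho_4$ are the side folding angles of $T$ and $\rho_5,\rho_7$ the corresponding ones of $B$) if and only if one of the following holds: (i) both $T$ and $B$ move along branch 1, and $$\frac{\tan\frac{\alpha_1}{2}}{\tan\frac{\alpha_2}{2}}=\frac{\tan\frac{\alpha_3}{2}}{\tan\frac{\alpha_4}{2}}\quad\text{or}\quad \frac{\tan\frac{\alpha_1}{2}}{\tan\frac{\alpha_2}{2}}=\frac{\tan\frac{\alpha_4}{2}}{\tan\frac{\alpha_3}{2}};$$ (ii) both $T$ and $B$ move along branch 2, and $$\tan\tfrac{\alpha_1}{2}\tan\tfrac{\alpha_2}{2}=\tan\tfrac{\alpha_3}{2}\tan\tfrac{\alpha_4}{2}\quad\text{or}\quad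 \tan\tfrac{\alpha_1}{2}\tan\tfrac{\alpha_2}{2}\tan\tfrac{\alpha_3}{2}\tan\tfrac{\alpha_4}{2}=1.$$ In particular, the condition can never hold when one vertex moves along branch 1 and the other along branch 2.
   Context: A developable degree-4 single-vertex creased paper consists of four rigid planar panels around a vertex, with sector angles summing to $2\pi$, hinged along four inner creases; a rigid folding motion assigns to each crease a signed folding angle (0 = unfolded, sign = mountain/valley), the folding angle of a crease being intrinsic to that crease. It is flat-foldable if opposite sector angles sum to $\pi$. For a flat-foldable vertex with sector angles $\beta_1,\beta_2,\beta_3,\beta_4$ in cyclic order, $\beta_1+\beta_3=\pi$, $\beta_2+\beta_4=\pi$, $\beta_1,\beta_2\in(0,\pi)$ not both $\pi/2$, and creases $c_1$ (between $\beta_1,\beta_2$), $c_2$ (between $\beta_2,\beta_3$), $c_3$ (between $\beta_3,\beta_4$), $c_4$ (between $\beta_4,\beta_1$) with folding angles $\rho_1,\dots,\rho_4$, its rigid folding motions lie on two branches: Branch 1: $\tan\frac{\rho_2}{2}=\frac{\sin\frac{\beta_2-\beta_1}{2}}{\sin\frac{\beta_2+\beta_1}{2}}\tan\frac{\rho_1}{2}$, $\rho_3=\rho_1$, $\rho_4=-\rho_2$. Branch 2: $\tan\frac{\rho_2}{2}=-\frac{\cos\frac{\beta_2-\beta_1}{2}}{\cos\frac{\beta_2+\beta_1}{2}}\tan\frac{\rho_1}{2}$, $\rho_3=-\rho_1$, $\rho_4=\rho_2$. In the claim these are applied to each of $T$ and $B$ with $c_1$ taken to be the shared crease $c$ (so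 $(\beta_1,\beta_2)=(\alpha_1,\alpha_2)$ for $T$ and $(\alpha_3,\alpha_4)$ for $B$), the side creases being $c_2$ and $c_4$ of each vertex. *)

(* Defs.v *)
From Stdlib Require Import Reals Lra.
Open Scope R_scope.

(* Denominator-free form of  tan(x/2) = (N/D) * tan(y/2).
   For folding angles x, y in [-PI, PI] (half angles in [-PI/2, PI/2]) this
   is exactly the paper's relation whenever the tangents/quotient are finite,
   and it is the natural (projective) reading of it at flat-folded states
   (x or y = +-PI) and when D = 0. *)
Definition half_tan_rel (N D x y : R) : Prop :=
  D * sin (x / 2) * cos (y / 2) = N * sin (y / 2) * cos (x / 2).

Inductive branch : Type := Br1 | Br2.

(* Folding angles (r1,r2,r3,r4) of a flat-foldable degree-4 vertex with sector
   angles b1, b2, PI-b1, PI-b2 (crease c1 between b1 and b2, c2 between b2 and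
   b3, c3 between b3 and b4, c4 between b4 and b1) lie on the given branch. *)
Definition on_branch (br : branch) (b1 b2 r1 r2 r3 r4 : R) : Prop :=
  match br with
  | Br1 => half_tan_rel (sin ((b2 - b1) / 2)) (sin ((b2 + b1) / 2)) r2 r1
           /\ r3 = r1 /\ r4 = - r2
  | Br2 => half_tan_rel (- cos ((b2 - b1) / 2)) (cos ((b2 + b1) / 2)) r2 r1
           /\ r3 = - r1 /\ r4 = r2
  end.

Definition cont_on (a b : R) (f : R -> R) : Prop :=
  forall x, a <= x <= b -> forall eps, 0 < eps ->
    exists delta, 0 < delta /\
      forall y, a <= y <= b -> Rabs (y - x) < delta -> Rabs (f y - f x) < eps.

Definition is_fold_angle (x : R) : Prop := - PI <= x <= PI.

(* A rigid folding motion of the unit over rho in [a,b]: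
   T has sector angles a1, a2 adjacent to the shared crease c (folding angle
   rho), side creases with folding angles r2 (c2) and r4 (c4), opposite crease r3;
   B has sector angles a3, a4 adjacent to c, side creases r5 (its c2, same side
   of c as r2) and r7 (its c4, same side as r4), opposite crease r6. *)
Definition unit_motion (a1 a2 a3 a4 a b : R) (bT bB : branch)
  (r2 r3 r4 r5 r6 r7 : R -> R) : Prop :=
  (forall f : R -> R,
     (f = r2 \/ f = r3 \/ f = r4 \/ f = r5 \/ f = r6 \/ f = r7) ->
     cont_on a b f /\ forall x, a <= x <= b -> is_fold_angle (f x)) /\
  (forall x, a <= x <= b ->
     on_branch bT a1 a2 x (r2 x) (r3 x) (r4 x) /\
     on_branch bB a3 a4 x (r5 x) (r6 x) (r7 x)).

Definition eq_up_to_sign (a b : R) (f g : R -> R) : Prop :=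
  (forall x, a <= x <= b -> f x = g x) \/ (forall x, a <= x <= b -> f x = - g x).

(* Main.v *)
Require Import Defs.
From Stdlib Require Import Reals Lra.
Open Scope R_scope.

Definition clamp (a b x : R) := Rmax a (Rmin b x).

Lemma clamp_in a b x : a <= b -> a <= clamp a b x <= b.
Proof. intros; unfold clamp, Rmax, Rmin; repeat destruct Rle_dec; lra. Qed.

Lemma clamp_id a b x : a <= x <= b -> clamp a b x = x.
Proof. intros; unfold clamp, Rmax, Rmin; repeat destruct Rle_dec; lra. Qed.

Lemma clamp_lip a b x y : a <= b -> Rabs (clamp a b y - clamp a b x) <= Rabs (y - x).
Proof. intros; unfold clamp, Rmax, Rmin; repeat destruct Rle_dec; split_Rabs; lra. Qed.

Lemma cont_ext a b f : a <= b -> cont_on a b f -> continuity (fun x => f (clamp a b x)).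
Proof.
  intros Hab Hc x. unfold continuity_pt, continue_in, limit1_in, limit_in; simpl; unfold R_dist.
  intros eps Heps.
  destruct (Hc (clamp a b x) (clamp_in a b x Hab) eps Heps) as [d [Hd H]].
  exists d; split; [lra|]. intros y [_ Hy].
  apply H. apply clamp_in; lra. pose proof (clamp_lip a b x y Hab). lra.
Qed.

Lemma ivt_on a b f x y : cont_on a b f -> a <= x -> x <= y -> y <= b ->
  f x * f y <= 0 -> exists z, x <= z <= y /\ f z = 0.
Proof.
  intros Hc Hx Hxy Hy Hp.
  assert (Hab : a <= b) by lra.
  pose proof (cont_ext a b f Hab Hc) as Hk.
  destruct (IVT_cor _ x y Hk Hxy) as [z [Hz Hfz]].
  rewrite !clamp_id; lra.
  exists z; split; auto. rewrite clamp_id in Hfz; auto; lra.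
Qed.

Lemma lim_right a b f g k x0 b' : cont_on a b f -> cont_on a b g -> (k = 1 \/ k = -1) ->
  a <= x0 -> x0 < b' -> b' <= b ->
  (forall y, x0 < y < b' -> f y = k * g y) -> f x0 = k * g x0.
Proof.
  intros Hf Hg Hk H0 H1 H2 Heq.
  destruct (Req_dec (f x0) (k * g x0)) as [E|E]; auto. exfalso.
  set (e := Rabs (f x0 - k * g x0)).
  assert (He : 0 < e) by (unfold e; apply Rabs_pos_lt; lra).
  destruct (Hf x0 ltac:(lra) (e/2) ltac:(lra)) as [d1 [Hd1 H1']].
  destruct (Hg x0 ltac:(lra) (e/2) ltac:(lra)) as [d2 [Hd2 H2']].
  set (m := Rmin (Rmin d1 d2) (b' - x0)).
  assert (Hm : 0 < m /\ m <= d1 /\ m <= d2 /\ m <= b' - x0).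
  { unfold m, Rmin; repeat destruct Rle_dec; lra. }
  set (y := x0 + m / 2).
  assert (Hy1 := H1' y ltac:(unfold y; lra) ltac:(unfold y; split_Rabs; lra)).
  assert (Hy2 := H2' y ltac:(unfold y; lra) ltac:(unfold y; split_Rabs; lra)).
  rewrite (Heq y ltac:(unfold y; lra)) in Hy1.
  unfold e in *. destruct Hk; subst k; split_Rabs; lra.
Qed.

Lemma lim_left a b f g k x0 a' : cont_on a b f -> cont_on a b g -> (k = 1 \/ k = -1) ->
  a <= a' -> a' < x0 -> x0 <= b ->
  (forall y, a' < y < x0 -> f y = k * g y) -> f x0 = k * g x0.
Proof.
  intros Hf Hg Hk H0 H1 H2 Heq.
  destruct (Req_dec (f x0) (k * g x0)) as [E|E]; auto. exfalso.
  set (e := Rabs (f x0 - k * g x0)).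
  assert (He : 0 < e) by (unfold e; apply Rabs_pos_lt; lra).
  destruct (Hf x0 ltac:(lra) (e/2) ltac:(lra)) as [d1 [Hd1 H1']].
  destruct (Hg x0 ltac:(lra) (e/2) ltac:(lra)) as [d2 [Hd2 H2']].
  set (m := Rmin (Rmin d1 d2) (x0 - a')).
  assert (Hm : 0 < m /\ m <= d1 /\ m <= d2 /\ m <= x0 - a').
  { unfold m, Rmin; repeat destruct Rle_dec; lra. }
  set (y := x0 - m / 2).
  assert (Hy1 := H1' y ltac:(unfold y; lra) ltac:(unfold y; split_Rabs; lra)).
  assert (Hy2 := H2' y ltac:(unfold y; lra) ltac:(unfold y; split_Rabs; lra)).
  rewrite (Heq y ltac:(unfold y; lra)) in Hy1.
  unfold e in *. destruct Hk; subst k; split_Rabs; lra.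
Qed.

Lemma cont_const a b c : cont_on a b (fun _ => c).
Proof. intros x _ eps He. exists 1; split; [lra|]. intros. rewrite Rminus_diag, Rabs_R0; lra. Qed.

Lemma const_pm a b f : cont_on a b f -> a < b ->
  (forall x, a<=x<=b -> x<>0 -> f x = PI \/ f x = -PI) ->
  exists s, (s = PI \/ s = -PI) /\ forall x, a<=x<=b -> f x = s.
Proof.
  intros Hc Hab Hv. pose proof PI_RGT_0.
  assert (A : forall x y, a <= x -> x <= y -> y <= b -> (y < 0 \/ 0 < x) -> f x = f y).
  { intros x y H1 H2 H3 H4.
    destruct (Hv x ltac:(lra) ltac:(lra)) as [E1|E1];
    destruct (Hv y ltac:(lra) ltac:(lra)) as [E2|E2]; try congruence;
    (destruct (ivt_on a b f x y Hc H1 H2 H3) as [z [Hz Hfz]];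
     [rewrite E1, E2; nra|];
     destruct (Hv z ltac:(lra) ltac:(lra)); lra). }
  destruct (Rlt_le_dec 0 a) as [Ha|Ha].
  { exists (f a). split. apply Hv; lra.
    intros x Hx. symmetry. apply A; lra. }
  destruct (Rlt_le_dec b 0) as [Hb|Hb].
  { exists (f b). split. apply Hv; lra.
    intros x Hx. apply A; lra. }
  assert (La : a < 0 -> f 0 = f a).
  { intro Ha'. rewrite <- (Rmult_1_l (f a)).
    apply (lim_left a b f (fun _ => f a) 1 0 a Hc (cont_const a b (f a))); try lra.
    intros y Hy. rewrite Rmult_1_l. symmetry. apply A; lra. }
  assert (Lb : 0 < b -> f 0 = f b).
  { intro Hb'. rewrite <- (Rmult_1_l (f b)).
    apply (lim_right a b f (fun _ => f b) 1 0 b Hc (cont_const a b (f b))); try lra.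
    intros y Hy. rewrite Rmult_1_l. apply A; lra. }
  exists (f 0). split.
  { destruct (Rlt_le_dec a 0).
    - rewrite La by lra. apply Hv; lra.
    - rewrite Lb by lra. apply Hv; lra. }
  intros x Hx.
  destruct (Rlt_le_dec x 0).
  - rewrite La by lra. symmetry; apply A; lra.
  - destruct (Req_dec x 0). subst; auto.
    rewrite Lb by lra. apply A; lra.
Qed.

Lemma half_cos_ge r : is_fold_angle r -> 0 <= cos (r/2).
Proof. unfold is_fold_angle; intros; apply cos_ge_0; lra. Qed.
Lemma half_cos_pos r : -PI < r < PI -> 0 < cos (r/2).
Proof. intros; apply cos_gt_0; lra. Qed.
Lemma half_cos0 r : is_fold_angle r -> cos (r/2) = 0 -> r = PI \/ r = -PI.
Proof.
  unfold is_fold_angle; intros H E.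
  destruct (Req_dec r PI); auto. destruct (Req_dec r (-PI)); auto.
  pose proof (half_cos_pos r ltac:(lra)); lra.
Qed.
Lemma sin_zero_small z : -PI < z < PI -> sin z = 0 -> z = 0.
Proof.
  intros H E. destruct (Rtotal_order z 0) as [h|[h|h]]; auto.
  - pose proof (sin_gt_0 (-z) ltac:(lra) ltac:(lra)). rewrite sin_neg in H0. lra.
  - pose proof (sin_gt_0 z ltac:(lra) ltac:(lra)). lra.
Qed.
Lemma half_sin_nz x : -PI<=x<=PI -> x<>0 -> sin (x/2) <> 0.
Proof. intros H N E. apply sin_zero_small in E; [lra|]. pose proof PI_RGT_0; lra. Qed.

Lemma sc1 r : sin r * sin r + cos r * cos r = 1.
Proof. pose proof (sin2_cos2 r). unfold Rsqr in H. lra. Qed.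

Lemma fold_open r : is_fold_angle r -> 0 < cos (r/2) -> -PI < r < PI.
Proof.
  intros H C. unfold is_fold_angle in H.
  destruct (Req_dec r PI). subst. replace (PI/2) with (PI/2) in C by lra. rewrite cos_PI2 in C; lra.
  destruct (Req_dec r (-PI)). subst. replace (-PI/2) with (-(PI/2)) in C by lra. rewrite cos_neg, cos_PI2 in C; lra.
  lra.
Qed.

Lemma point_back NT DT NB DB e x fx gx : -PI<x<PI -> is_fold_angle fx -> is_fold_angle gx ->
  DT<>0 -> DB<>0 -> (e=1\/e=-1) -> half_tan_rel NT DT fx x -> half_tan_rel NB DB gx x ->
  NT*DB = e*NB*DT -> fx = e*gx.
Proof.
  unfold half_tan_rel. intros Hx Hf Hg HT HB He R1 R2 Hc.
  pose proof (half_cos_pos x Hx) as C.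
  set (u := sin (fx/2)) in *. set (v := cos (fx/2)) in *.
  set (u' := sin (gx/2)) in *. set (v' := cos (gx/2)) in *.
  set (S := sin (x/2)) in *. set (K := cos (x/2)) in *.
  assert (Hv : 0 < v).
  { destruct (half_cos_ge fx Hf) as [h|h]; auto. exfalso. fold v in h.
    pose proof (sc1 (fx/2)). fold u v in H. rewrite <- h in R1, H.
    assert (DT*u*K = 0) by lra. assert (u <> 0) by nra.
    apply Rmult_integral in H0 as [H0|H0]; [apply Rmult_integral in H0 as [|]|]; lra. }
  assert (Hv' : 0 < v').
  { destruct (half_cos_ge gx Hg) as [h|h]; auto. exfalso. fold v' in h.
    pose proof (sc1 (gx/2)). fold u' v' in H. rewrite <- h in R2, H.
    assert (DB*u'*K = 0) by lra. assert (u' <> 0) by nra.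
    apply Rmult_integral in H0 as [H0|H0]; [apply Rmult_integral in H0 as [|]|]; lra. }
  pose proof (fold_open fx Hf Hv). pose proof (fold_open gx Hg Hv').
  assert (Z : DT*DB*K*(u*v' - v*e*u') = 0).
  { replace (DT*DB*K*(u*v' - v*e*u')) with (DB*v'*(DT*u*K) - e*DT*v*(DB*u'*K)) by ring.
    rewrite R1, R2.
    replace (DB * v' * (NT * S * v) - e * DT * v * (NB * S * v')) with (S*v*v'*(NT*DB - e*NB*DT)) by ring.
    rewrite Hc; ring. }
  assert (Z' : u*v' - v*e*u' = 0).
  { apply Rmult_integral in Z as [Z|Z]; auto. exfalso.
    apply Rmult_integral in Z as [Z|Z]; [apply Rmult_integral in Z as [|]|]; lra. }
  assert (W : sin (fx/2 - e*gx/2) = 0).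
  { rewrite sin_minus. destruct He; subst e.
    - replace (1*gx/2) with (gx/2) by lra. fold u v u' v'. lra.
    - replace (-1*gx/2) with (-(gx/2)) by lra. rewrite sin_neg, cos_neg. fold u v u' v'. lra. }
  apply sin_zero_small in W; [lra|]. destruct He; subst e; lra.
Qed.

Lemma point_fwd NT DT NB DB e x fx gx : -PI<x<PI -> x <> 0 -> is_fold_angle fx -> is_fold_angle gx ->
  (e=1\/e=-1) -> half_tan_rel NT DT fx x -> half_tan_rel NB DB gx x ->
  fx = e*gx -> NT*DB = e*NB*DT \/ (DT = 0 /\ DB = 0).
Proof.
  unfold half_tan_rel. intros Hx H0 Hf Hg He R1 R2 Hfg.
  pose proof (half_cos_pos x Hx) as C.
  assert (HS : sin (x/2) <> 0) by (apply half_sin_nz; lra).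
  assert (Hu : sin (fx/2) = e * sin (gx/2)).
  { rewrite Hfg. destruct He; subst e. replace (1*gx/2) with (gx/2) by lra; ring.
    replace (-1*gx/2) with (-(gx/2)) by lra. rewrite sin_neg; lra. }
  assert (Hv : cos (fx/2) = cos (gx/2)).
  { rewrite Hfg. destruct He; subst e. replace (1*gx/2) with (gx/2) by lra; ring.
    replace (-1*gx/2) with (-(gx/2)) by lra. rewrite cos_neg; lra. }
  set (u := sin (fx/2)) in *. set (v := cos (fx/2)) in *.
  set (u' := sin (gx/2)) in *. set (v' := cos (gx/2)) in *.
  set (S := sin (x/2)) in *. set (K := cos (x/2)) in *.
  destruct (Req_dec v 0) as [V|V].
  - right. pose proof (sc1 (fx/2)). fold u v in H. rewrite V in H, R1. rewrite <- Hv, V in R2.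
    assert (N1 : u <> 0) by nra. assert (N2 : u' <> 0) by (intro Q; apply N1; rewrite Hu, Q; ring).
    split.
    + assert (Q : DT*u*K = 0) by lra.
      apply Rmult_integral in Q as [Q|Q]; [apply Rmult_integral in Q as [|]|]; lra.
    + assert (Q : DB*u'*K = 0) by lra.
      apply Rmult_integral in Q as [Q|Q]; [apply Rmult_integral in Q as [|]|]; lra.
  - left.
    assert (Z : S*v*(NT*DB - e*NB*DT) = 0).
    { replace (S*v*(NT*DB - e*NB*DT)) with (DB*(NT*S*v) - e*DT*(NB*S*v)) by ring.
      rewrite <- R1. rewrite Hv, <- R2. rewrite Hu. destruct He; subst e; ring. }
    apply Rmult_integral in Z as [Z|Z]; [apply Rmult_integral in Z as [|]|]; try lra.
Qed.

Lemma degen_pm a b f N : N <> 0 -> (forall x, a<=x<=b -> is_fold_angle x) ->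
  (forall x, a<=x<=b -> is_fold_angle (f x)) ->
  (forall x, a<=x<=b -> half_tan_rel N 0 (f x) x) ->
  forall x, a<=x<=b -> x<>0 -> f x = PI \/ f x = -PI.
Proof.
  intros HN Hx Hf Hr x H1 H2. apply half_cos0; auto.
  specialize (Hr x H1). unfold half_tan_rel in Hr.
  assert (HS := half_sin_nz x (Hx x H1) H2).
  assert (Q : N * sin (x/2) * cos (f x / 2) = 0) by lra.
  apply Rmult_integral in Q as [Q|Q]; [apply Rmult_integral in Q as [|]|]; lra.
Qed.

Lemma core_back a b f g NT DT NB DB e : -PI<=a -> a<b -> b<=PI ->
  cont_on a b f -> cont_on a b g ->
  (forall x, a<=x<=b -> is_fold_angle (f x) /\ is_fold_angle (g x)) ->
  (forall x, a<=x<=b -> half_tan_rel NT DT (f x) x /\ half_tan_rel NB DB (g x) x) ->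
  ~(NT=0/\DT=0) -> ~(NB=0/\DB=0) -> (e=1\/e=-1) -> NT*DB = e*NB*DT ->
  eq_up_to_sign a b f g.
Proof.
  intros Ha Hab Hb Hf Hg Hfa Hr NzT NzB He Hc.
  assert (Hxa : forall x, a<=x<=b -> is_fold_angle x) by (intros; unfold is_fold_angle; lra).
  destruct (Req_dec DT 0) as [ZT|ZT].
  - assert (NT <> 0) by tauto.
    assert (ZB : DB = 0).
    { rewrite ZT, Rmult_0_r in Hc. apply Rmult_integral in Hc as [|]; tauto. }
    assert (NB <> 0) by tauto. subst DT DB.
    destruct (const_pm a b f Hf Hab (degen_pm a b f NT H Hxa (fun x h => proj1 (Hfa x h)) (fun x h => proj1 (Hr x h))))
      as [s [Hs Fs]].
    destruct (const_pm a b g Hg Hab (degen_pm a b g NB H0 Hxa (fun x h => proj2 (Hfa x h)) (fun x h => proj2 (Hr x h))))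
      as [s' [Hs' Gs]].
    pose proof PI_RGT_0.
    destruct (Req_dec s s').
    + left. intros x Hx. rewrite Fs, Gs; auto.
    + right. intros x Hx. rewrite Fs, Gs; auto. lra.
  - destruct (Req_dec DB 0) as [ZB|ZB].
    { exfalso. rewrite ZB, Rmult_0_r in Hc. symmetry in Hc.
      apply Rmult_integral in Hc as [Hc|Hc]; [apply Rmult_integral in Hc as [|]|]; try lra; tauto. }
    assert (Int : forall x, a<=x<=b -> -PI<x<PI -> f x = e * g x).
    { intros x Hx Hx'. destruct (Hfa x Hx). destruct (Hr x Hx).
      exact (point_back NT DT NB DB e x (f x) (g x) Hx' H H0 ZT ZB He H1 H2 Hc). }
    assert (All : forall x, a<=x<=b -> f x = e * g x).
    { intros x Hx.
      destruct (Req_dec x PI).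
      { apply (lim_left a b f g e x a Hf Hg He); try lra.
        intros y Hy. apply Int; lra. }
      destruct (Req_dec x (-PI)).
      { apply (lim_right a b f g e x b Hf Hg He); try lra.
        intros y Hy. apply Int; lra. }
      apply Int; auto; lra. }
    destruct He; subst e.
    + left. intros. rewrite All; auto; ring.
    + right. intros. rewrite All; auto; ring.
Qed.

Definition NN br s1 c1 s2 c2 := match br with Br1 => s2*c1 - c2*s1 | Br2 => -(c2*c1 + s2*s1) end.
Definition DD br s1 c1 s2 c2 := match br with Br1 => s2*c1 + c2*s1 | Br2 => c2*c1 - s2*s1 end.
Definition sg br := match br with Br1 => -1 | Br2 => 1 end.

Definition Cond (bT bB : branch) (t1 t2 t3 t4 : R) : Prop :=
  (bT = Br1 /\ bB = Br1 /\ (t1 / t2 = t3 / t4 \/ t1 / t2 = t4 / t3)) \/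
  (bT = Br2 /\ bB = Br2 /\ (t1 * t2 = t3 * t4 \/ t1 * t2 * t3 * t4 = 1)).

Lemma mixed_contra A B C E e : 0<A -> 0<B -> 0<C -> 0<E -> (e=1\/e=-1) ->
  (A-B)*(C-E) = e*(-(C+E))*(A+B) -> False.
Proof.
  intros HA HB HC HE He H.
  assert (H2 : ((A-B)*(C-E))^2 = ((C+E)*(A+B))^2) by (rewrite H; destruct He; subst; ring).
  assert (h1 : (A-B)^2 < (A+B)^2) by nra.
  assert (h2 : (C-E)^2 < (C+E)^2) by nra.
  assert (h3 : 0 <= (A-B)^2) by nra.
  assert (h4 : 0 <= (C-E)^2) by nra.
  assert (((A-B)*(C-E))^2 = (A-B)^2*(C-E)^2) by ring.
  assert (((C+E)*(A+B))^2 = (A+B)^2*(C+E)^2) by ring.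
  nra.
Qed.

Lemma alg_fwd bT bB s1 c1 s2 c2 s3 c3 s4 c4 e :
  0<s1->0<s2->0<s3->0<s4->0<c1->0<c2->0<c3->0<c4-> (e=1\/e=-1) ->
  (NN bT s1 c1 s2 c2 * DD bB s3 c3 s4 c4 = e * NN bB s3 c3 s4 c4 * DD bT s1 c1 s2 c2
   \/ (DD bT s1 c1 s2 c2 = 0 /\ DD bB s3 c3 s4 c4 = 0)) ->
  Cond bT bB (s1/c1) (s2/c2) (s3/c3) (s4/c4).
Proof.
  intros. unfold Cond.
  destruct bT, bB; simpl in *.
  - left. repeat split. destruct H8 as [H8|H8]; [|exfalso; nra].
    destruct H7; subst e.
    + left. field_simplify_eq; [|lra..]. lra.
    + right. field_simplify_eq; [|lra..]. lra.
  - exfalso. destruct H8 as [H8|H8]; [|nra].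
    apply (mixed_contra (s2*c1) (c2*s1) (c4*c3) (s4*s3) e); try nra; auto.
  - exfalso. destruct H8 as [H8|H8]; [|nra].
    apply (mixed_contra (s4*c3) (c4*s3) (c2*c1) (s2*s1) (e)); try nra; auto.
  - right. repeat split. destruct H8 as [H8|H8].
    + destruct H7; subst e.
      * left. field_simplify_eq; [|lra..]. lra.
      * right. field_simplify_eq; [|lra..]. lra.
    + right. field_simplify_eq; [|lra..]. destruct H8 as [P Q]. replace (s1*s2*s3*s4) with ((s2*s1)*(s4*s3)) by ring. replace (c1*c2*c3*c4) with ((c2*c1)*(c4*c3)) by ring. rewrite <- (Rminus_diag_uniq _ _ P), <- (Rminus_diag_uniq _ _ Q). ring.
Qed.

Lemma alg_back bT bB s1 c1 s2 c2 s3 c3 s4 c4 :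
  0<s1->0<s2->0<s3->0<s4->0<c1->0<c2->0<c3->0<c4->
  Cond bT bB (s1/c1) (s2/c2) (s3/c3) (s4/c4) ->
  bT = bB /\ exists e, (e=1\/e=-1) /\
  NN bT s1 c1 s2 c2 * DD bB s3 c3 s4 c4 = e * NN bB s3 c3 s4 c4 * DD bT s1 c1 s2 c2.
Proof.
  intros. unfold Cond in H7.
  destruct H7 as [[-> [-> [HH|HH]]]|[-> [-> [HH|HH]]]]; split; auto; simpl.
  - exists 1. split; auto. field_simplify_eq in HH; [|lra..]. lra.
  - exists (-1). split; auto. field_simplify_eq in HH; [|lra..]. lra.
  - exists 1. split; auto. field_simplify_eq in HH; [|lra..]. lra.
  - exists (-1). split; auto. field_simplify_eq in HH; [|lra..]. lra.
Qed.

Lemma ob_rel br b1 b2 r1 r2 r3 r4 : on_branch br b1 b2 r1 r2 r3 r4 ->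
  half_tan_rel (NN br (sin (b1/2)) (cos (b1/2)) (sin (b2/2)) (cos (b2/2)))
               (DD br (sin (b1/2)) (cos (b1/2)) (sin (b2/2)) (cos (b2/2))) r2 r1
  /\ r4 = sg br * r2.
Proof.
  destruct br; simpl; intros [H [_ H4]]; (split; [|lra]);
  replace ((b2-b1)/2) with (b2/2 - b1/2) in H by field;
  replace ((b2+b1)/2) with (b2/2 + b1/2) in H by field.
  - rewrite sin_minus, sin_plus in H. exact H.
  - rewrite cos_minus, cos_plus in H. exact H.
Qed.

Lemma ND_nz br s1 c1 s2 c2 : 0<s1->0<s2->0<c1->0<c2->
  ~(NN br s1 c1 s2 c2 = 0 /\ DD br s1 c1 s2 c2 = 0).
Proof. intros; destruct br; simpl; intros [P Q]; nra. Qed.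

Lemma half_pos t : 0 < t < PI -> 0 < sin (t/2) /\ 0 < cos (t/2).
Proof. intros. split; [apply sin_gt_0|apply cos_gt_0]; lra. Qed.

Theorem mainTheorem2 (a1 a2 a3 a4 a b : R) (bT bB : branch)
  (r2 r3 r4 r5 r6 r7 : R -> R) :
  0 < a1 < PI -> 0 < a2 < PI -> 0 < a3 < PI -> 0 < a4 < PI ->
  ~ (a1 = PI / 2 /\ a2 = PI / 2) -> ~ (a3 = PI / 2 /\ a4 = PI / 2) ->
  - PI <= a -> a < b -> b <= PI ->
  unit_motion a1 a2 a3 a4 a b bT bB r2 r3 r4 r5 r6 r7 ->
  ((eq_up_to_sign a b r2 r5 /\ eq_up_to_sign a b r4 r7) <->
   ((bT = Br1 /\ bB = Br1 /\
     (tan (a1 / 2) / tan (a2 / 2) = tan (a3 / 2) / tan (a4 / 2) \/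
      tan (a1 / 2) / tan (a2 / 2) = tan (a4 / 2) / tan (a3 / 2)))
    \/
    (bT = Br2 /\ bB = Br2 /\
     (tan (a1 / 2) * tan (a2 / 2) = tan (a3 / 2) * tan (a4 / 2) \/
      tan (a1 / 2) * tan (a2 / 2) * tan (a3 / 2) * tan (a4 / 2) = 1)))).
Proof.
  intros H1 H2 H3 H4 _ _ Ha Hab Hb [Hc Hr].
  destruct (Hc r2 ltac:(tauto)) as [C2 F2].
  destruct (Hc r5 ltac:(tauto)) as [C5 F5].
  destruct (half_pos a1 H1) as [ps1 pc1].
  destruct (half_pos a2 H2) as [ps2 pc2].
  destruct (half_pos a3 H3) as [ps3 pc3].
  destruct (half_pos a4 H4) as [ps4 pc4].
  unfold tan.
  change (eq_up_to_sign a b r2 r5 /\ eq_up_to_sign a b r4 r7 <->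
    Cond bT bB (sin (a1/2)/cos (a1/2)) (sin (a2/2)/cos (a2/2)) (sin (a3/2)/cos (a3/2)) (sin (a4/2)/cos (a4/2))).
  set (s1 := sin (a1/2)) in *. set (c1 := cos (a1/2)) in *.
  set (s2 := sin (a2/2)) in *. set (c2 := cos (a2/2)) in *.
  set (s3 := sin (a3/2)) in *. set (c3 := cos (a3/2)) in *.
  set (s4 := sin (a4/2)) in *. set (c4 := cos (a4/2)) in *.
  assert (HT : forall x, a<=x<=b -> half_tan_rel (NN bT s1 c1 s2 c2) (DD bT s1 c1 s2 c2) (r2 x) x
                                    /\ r4 x = sg bT * r2 x).
  { intros x Hx. exact (ob_rel _ _ _ _ _ _ _ (proj1 (Hr x Hx))). }
  assert (HB : forall x, a<=x<=b -> half_tan_rel (NN bB s3 c3 s4 c4) (DD bB s3 c3 s4 c4) (r5 x) x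
                                    /\ r7 x = sg bB * r5 x).
  { intros x Hx. exact (ob_rel _ _ _ _ _ _ _ (proj2 (Hr x Hx))). }
  split.
  - intros [E _].
    assert (Hx0 : exists x0, a < x0 < b /\ x0 <> 0).
    { destruct (Req_dec ((a+b)/2) 0).
      - exists ((a+3*b)/4). split; lra.
      - exists ((a+b)/2). split; lra. }
    destruct Hx0 as [x0 [Hx0 Nx0]].
    assert (Hx0' : a <= x0 <= b) by lra.
    assert (Ex : exists e, (e=1\/e=-1) /\ r2 x0 = e * r5 x0).
    { destruct E as [E|E].
      - exists 1. split; auto. rewrite E; auto; ring.
      - exists (-1). split; auto. rewrite E; auto; ring. }
    destruct Ex as [e [He Ee]].
    apply (alg_fwd bT bB s1 c1 s2 c2 s3 c3 s4 c4 e); auto.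
    apply (point_fwd _ _ _ _ e x0 (r2 x0) (r5 x0)); auto; try lra.
    apply HT; auto. apply HB; auto.
  - intro HC.
    destruct (alg_back bT bB s1 c1 s2 c2 s3 c3 s4 c4) as [Heq [e [He Hce]]]; auto.
    subst bB.
    assert (E25 : eq_up_to_sign a b r2 r5).
    { apply (core_back a b r2 r5 (NN bT s1 c1 s2 c2) (DD bT s1 c1 s2 c2) (NN bT s3 c3 s4 c4) (DD bT s3 c3 s4 c4) e Ha Hab Hb C2 C5); auto.
      all: try (intros x Hx; split; [apply HT|apply HB]; auto).
      all: apply ND_nz; auto. }
    split; auto.
    destruct E25 as [E|E]; [left|right]; intros x Hx;
      rewrite (proj2 (HT x Hx)), (proj2 (HB x Hx)), E; auto; ring.
Qed.
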